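(* Let $\mathcal{D},\mathcal{T}$ be distributions over a finite set $X$, where $\mathcal{T}=\sum_{i=1}^kc_i\mathcal{T}_i$ is a convex combination of distributions $\mathcal{T}_1,\dots,\mathcal{T}_k$ on $X$ with $c_i>0$ and $\sum_ic_i=1$. Suppose $\|\mathcal{D}-\mathcal{T}_i\|_{\mathtt{TV}}=1-\varepsilon_i$ with $\varepsilon_i\in[0,1/2]$ for each $i$. Then \[ \|\mathcal{D}-\mathcal{T}\|_{\mathtt{TV}}\ \ge\ 1-\sum_{i=1}^k(1+c_i)\varepsilon_i. \]
   Context: Total variation distance: $\|\mathcal{D}_1-\mathcal{D}_2\|_{\mathtt{TV}}=\frac12\sum_{x}|\mathcal{D}_1(x)-\mathcal{D}_2(x)|=\max_{A}(\mathcal{D}_1(A)-\mathcal{D}_2(A))$. *)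

(* Defs.v *)
From mathcomp Require Import all_boot all_order all_algebra.
Set Implicit Arguments. Unset Strict Implicit. Unset Printing Implicit Defensive.
Import Order.TTheory GRing.Theory Num.Theory.
Local Open Scope ring_scope.

Definition is_distr (R : realFieldType) (X : finType) (D : X -> R) : Prop :=
  (forall x, 0 <= D x) /\ \sum_(x : X) D x = 1.

Definition tv_dist (R : realFieldType) (X : finType) (D1 D2 : X -> R) : R :=
  2^-1 * \sum_(x : X) `|D1 x - D2 x|.

(* Main.v *)
Require Import Defs.
From mathcomp Require Import all_boot all_order all_algebra.
From mathcomp Require Import lra.
Import Order.TTheory GRing.Theory Num.Theory.
Local Open Scope ring_scope.

Lemma abs_min (R : realFieldType) (a b : R) :
  `|a - b| = a + b - 2 * Order.min a b.
Proof.
rewrite minEle; case: (lerP a b) => h.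
  lra.
lra.
Qed.

Lemma min_step (R : realFieldType) (a b S : R) :
  0 <= a -> 0 <= b -> 0 <= S ->
  Order.min a (b + S) <= Order.min a b + Order.min a S.
Proof.
move=> ha hb hS; rewrite !minEle.
case: (lerP a (b + S)) => h1; case: (lerP a b) => h2; case: (lerP a S) => h3; lra.
Qed.

Lemma min_sum (R : realFieldType) (I : Type) (r : seq I) (a : R) (F : I -> R) :
  0 <= a -> (forall i, 0 <= F i) ->
  Order.min a (\sum_(i <- r) F i) <= \sum_(i <- r) Order.min a (F i).
Proof.
move=> ha hF; elim: r => [|x r IH].
  by rewrite !big_nil minEle; case: (lerP a 0) => h //; lra.
rewrite !big_cons.
have hs : 0 <= \sum_(i <- r) F i by apply: sumr_ge0 => i _.
apply: le_trans (@min_step R a _ _ ha (hF x) hs) _.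
by apply: lerD.
Qed.

Lemma tv_min (R : realFieldType) (X : finType) (P Q : X -> R) :
  \sum_x P x = 1 -> \sum_x Q x = 1 ->
  tv_dist P Q = 1 - \sum_x Order.min (P x) (Q x).
Proof.
move=> hP hQ; rewrite /tv_dist.
under eq_bigr => x _ do rewrite abs_min.
rewrite big_split /= big_split /= hP hQ sumrN -mulr_sumr.
set s := \sum_x _. lra.
Qed.

Theorem lemma3p3 (R : realFieldType) (X : finType) (k : nat)
  (D : X -> R) (Ti : 'I_k -> X -> R) (c eps : 'I_k -> R) :
  is_distr D ->
  (forall i, is_distr (Ti i)) ->
  (forall i, 0 < c i) ->
  \sum_(i < k) c i = 1 ->
  (forall i, 0 <= eps i <= 2^-1) ->
  (forall i, tv_dist D (Ti i) = 1 - eps i) ->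
  tv_dist D (fun x => \sum_(i < k) c i * Ti i x)
    >= 1 - \sum_(i < k) (1 + c i) * eps i.
Proof.
move=> [D0 D1] HT Hc Hs He Htv.
have T0 i x : 0 <= Ti i x by case: (HT i) => h _; exact: h.
have T1 i : \sum_x Ti i x = 1 by case: (HT i).
have c1 i : c i <= 1.
  rewrite -Hs (bigD1 i) //= lerDl; apply: sumr_ge0 => j _; exact: ltW.
have Heps i : \sum_x Order.min (D x) (Ti i x) = eps i.
  by have := Htv i; rewrite tv_min // => h; lra.
rewrite tv_min //; last first.
  rewrite exchange_big /= -Hs; apply: eq_bigr => i _.
  by rewrite -mulr_sumr T1 mulr1.
have step1 : \sum_x Order.min (D x) (\sum_(i < k) c i * Ti i x)
     <= \sum_x \sum_(i < k) Order.min (D x) (Ti i x).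
  apply: ler_sum => x _; apply: le_trans (@min_sum R _ _ (D x) _ (D0 x) _) _.
  { by move=> i; apply: mulr_ge0; [exact: ltW | exact: T0]. }
  apply: ler_sum => i _; rewrite !minEle.
  have h1 : c i * Ti i x <= Ti i x.
    by rewrite -[leRHS]mul1r; apply: ler_wpM2r.
  case: (lerP (D x) (c i * Ti i x)) => h2; case: (lerP (D x) (Ti i x)) => h3; lra.
rewrite exchange_big /= in step1.
have e : \sum_(i < k) \sum_x Order.min (D x) (Ti i x) = \sum_(i < k) eps i.
  by apply: eq_bigr => i _; exact: Heps.
rewrite e in step1.
have step2 : \sum_(i < k) eps i <= \sum_(i < k) (1 + c i) * eps i.
  apply: ler_sum => i _; have := Hc i; case/andP: (He i) => e0 e1 ci; nra.
lra.
Qed.
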